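(* Let $H$ be a graph and let $G$ be the graph obtained from $H$ by subdividing every edge of $H$ exactly twice (i.e., replacing each edge $xy$ of $H$ by a path $x\,a\,b\,y$ with two new internal vertices $a,b$). Let $m=|E(G)|$. Then ${\rm I}_e(G) \geq \frac{1}{3}m$.
   Context: All graphs are finite and simple. A graph is locally irregular if no two adjacent vertices have the same degree. For a graph $G$, an edge-irregulator of $G$ is a set $S\subseteq E(G)$ such that $G-S$ (the graph obtained by deleting the edges of $S$, keeping all vertices) is locally irregular. ${\rm I}_e(G)$ denotes the minimum cardinality of an edge-irregulator of $G$. *)

(* Defs.v *)
From mathcomp Require Import all_boot.
Set Implicit Arguments. Unset Strict Implicit. Unset Printing Implicit Defensive.

(* A finite simple graph on a finType T is given by a symmetric irreflexive
   adjacency relation adj : rel T. *)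

Section General.
Variables (T : finType) (adj : rel T).

Definition edges : {set {set T}} :=
  [set E | [exists u, exists v, adj u v && (E == [set u; v])]].

Definition deg_minus (S : {set {set T}}) (u : T) : nat :=
  #|[set v | adj u v & [set u; v] \notin S]|.

Definition locally_irregular_minus (S : {set {set T}}) : bool :=
  [forall u, forall v, (adj u v && ([set u; v] \notin S)) ==>
                       (deg_minus S u != deg_minus S v)].

Definition edge_irregulator (S : {set {set T}}) : bool :=
  (S \subset edges) && locally_irregular_minus S.

(* I_e(G): minimum cardinality of an edge-irregulator (E(G) itself is one). *)
Definition Ie : nat :=
  \big[minn/#|edges|]_(S : {set {set T}} | edge_irregulator S) #|S|.

End General.

Section Subdivision.
Variables (V : finType) (e : rel V).

(* Vertices of the graph obtained from H = (V, e) by subdividing every edge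
   twice: the original vertices (inl x), and for every edge xy of H the two
   internal vertices (x,y) (the one adjacent to x) and (y,x) (the one adjacent
   to y), so the edge xy becomes the path x - (x,y) - (y,x) - y. *)
Definition sub2_vertex : finType := (V + {p : V * V | e p.1 p.2})%type.

Definition sub2_adj : rel sub2_vertex := fun a b =>
  match a, b with
  | inl x, inr p => (val p).1 == x
  | inr p, inl x => (val p).1 == x
  | inr p, inr q => val q == ((val p).2, (val p).1)
  | inl _, inl _ => false
  end.

End Subdivision.

(* Main.v *)
Require Import Defs.
From mathcomp Require Import all_boot.

Section Proof.
Variables (V : finType) (e : rel V) (e_sym : symmetric e).

Local Notation T := (sub2_vertex e).
Local Notation P := {p : V * V | e p.1 p.2}.

Lemma sw_proof (p : P) : e (val p).2 (val p).1.
Proof. by rewrite e_sym; case: p. Qed.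

Definition sw (p : P) : P := exist _ ((val p).2, (val p).1) (sw_proof p).

Lemma swK p : sw (sw p) = p.
Proof. by apply: val_inj; case: p => [[x y] h]. Qed.

Lemma adj_inr_inr (p q : P) : sub2_adj (inr p : T) (inr q) = (q == sw p).
Proof. by []. Qed.

Lemma inr_eq (a b : P) : (inr a == inr b :> T) = (a == b).
Proof. by apply/eqP/eqP => [[]|->]. Qed.

Lemma inl_eq (a b : V) : (inl a == inl b :> T) = (a == b).
Proof. by apply/eqP/eqP => [[]|->]. Qed.

Definition f1 (p : P) : {set T} := [set inl (val p).1; inr p].
Definition f2 (p : P) : {set T} := [set inr p; inr (sw p)].
Definition path3 (p : P) : {set {set T}} := [set f1 p; f2 p; f1 (sw p)].

Lemma f2sw p : f2 (sw p) = f2 p.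
Proof. by rewrite /f2 swK setUC. Qed.

Lemma path3sw p : path3 (sw p) = path3 p.
Proof.
apply/setP => E; rewrite /path3 !inE swK f2sw.
by case: (E == f1 p); case: (E == f2 p); case: (E == f1 (sw p)).
Qed.

Lemma inr_in_path3 p s : s \in path3 p -> (inr p \in s) || (inr (sw p) \in s).
Proof.
rewrite /path3 !inE => /orP [/orP [] | ] /eqP ->; rewrite /f1 /f2 !inE ?eqxx ?orbT //.
Qed.

Lemma inr_path3_inv r q (s : {set T}) : (inr r : T) \in s -> s \in path3 q -> (r == q) || (r == sw q).
Proof.
move=> hr; rewrite /path3 !inE => /orP [/orP [] | ] /eqP Es; move: hr;
  rewrite Es /f1 /f2 !inE /= ?inr_eq; by case: (r == q); case: (r == sw q).
Qed.

Lemma path3_uniq p q s : s \in path3 p -> s \in path3 q -> path3 p = path3 q.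
Proof.
move=> /(inr_in_path3 _) /orP [] h hq; have := inr_path3_inv _ _ _ h hq =>
  /orP [] /eqP Eq.
- by rewrite Eq.
- by rewrite Eq path3sw.
- by rewrite -[p]swK Eq path3sw.
- by rewrite -[p]swK Eq swK.
Qed.

Lemma card_path3 p : #|path3 p| <= 3.
Proof.
rewrite /path3; apply: leq_trans (leq_card_setU _ _).1 _.
by rewrite cards1 cards2 addn1 ltnS; case: (_ != _).
Qed.

Lemma deg_inr (S : {set {set T}}) (r : P) :
  f1 r \notin S -> f2 r \notin S -> deg_minus (@sub2_adj V e) S (inr r) = 2.
Proof.
move=> h1 h2; rewrite /deg_minus.
have -> : [set v | sub2_adj (inr r : T) v & [set inr r; v] \notin S]
          = [set inl (val r).1; inr (sw r)].
  apply/setP => v; rewrite !inE.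
  case: v => [x|q] /=.
    rewrite inl_eq orbF; case: (x =P (sval r).1) => [->|ne].
      by rewrite eqxx setUC; exact: h1.
    by case: eqP => // E; case: ne.
  have -> : (inr q == inr (sw r) :> T) = (q == sw r) by apply/eqP/eqP => [[]|->].
  case: eqP => [Hq|Hq].
    have -> : q = sw r by apply: val_inj.
    by rewrite eqxx.
  by apply/esym/negbTE/eqP => E; apply: Hq; rewrite E.
by rewrite cards2.
Qed.

Lemma hits (S : {set {set T}}) (hS : edge_irregulator (@sub2_adj V e) S) p :
  exists2 E, E \in path3 p & E \in S.
Proof.
case h1: (f1 p \in S); first by exists (f1 p); rewrite // /path3 !inE eqxx.
case h2: (f2 p \in S); first by exists (f2 p); rewrite // /path3 !inE eqxx ?orbT.
case h3: (f1 (sw p) \in S); first by exists (f1 (sw p)); rewrite // /path3 !inE eqxx ?orbT.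
exfalso; move/andP: hS => [_ /forallP H].
move: (H (inr p)) => /forallP /(_ (inr (sw p))) /implyP.
rewrite adj_inr_inr eqxx /=.
have -> : [set inr p; inr (sw p)] \notin S by rewrite -/(f2 p) h2.
move=> /(_ isT).
rewrite (deg_inr _ _ (negbT h1) (negbT h2)).
by rewrite (deg_inr _ _ (negbT h3)) // f2sw h2.
Qed.

Lemma card_bigcup_le (U I : finType) (A : pred I) (F : I -> {set U}) :
  #|\bigcup_(i in A) F i| <= \sum_(i in A) #|F i|.
Proof.
apply: (big_ind2 (fun (X : {set U}) n => #|X| <= n)) => //=.
  by rewrite cards0.
move=> X n Y m h1 h2; exact: leq_trans (leq_card_setU X Y).1 (leq_add h1 h2).
Qed.

Definition F (s : {set T}) : {set {set T}} := \bigcup_(p | s \in path3 p) path3 p.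

Lemma card_F s : #|F s| <= 3.
Proof.
case: (pickP (fun p => s \in path3 p)) => [p0 hp0 | none].
  apply: leq_trans (card_path3 p0); apply: subset_leq_card.
  by apply/bigcupsP => p hp; rewrite (path3_uniq _ _ _ hp hp0).
by rewrite /F big_pred0 ?cards0.
Qed.

Lemma edges_in_path (E : {set T}) : E \in edges (@sub2_adj V e) -> exists p, E \in path3 p.
Proof.
rewrite inE => /existsP [u /existsP [v /andP [huv /eqP ->]]].
case: u huv => [x|q]; case: v => [y|q'] //=.
- move=> /eqP <-; exists q'; by rewrite /path3 !inE eqxx.
- move=> /eqP <-; exists q; by rewrite /path3 !inE setUC eqxx.
- move=> /eqP hq; have -> : q' = sw q by apply: val_inj.
  by exists q; rewrite /path3 !inE eqxx ?orbT.
Qed.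

Lemma main_bound (S : {set {set T}}) (hS : edge_irregulator (@sub2_adj V e) S) :
  #|edges (@sub2_adj V e)| <= 3 * #|S|.
Proof.
have sub : edges (@sub2_adj V e) \subset \bigcup_(s in S) F s.
  apply/subsetP => E /edges_in_path [p hp].
  have [s hs sS] := hits _ hS p.
  apply/bigcupP; exists s => //; apply/bigcupP; exists p => //.
apply: (leq_trans (subset_leq_card sub)).
apply: (leq_trans (card_bigcup_le _ _ (mem S) F)).

rewrite -[3 * _]mulnC -sum_nat_const; apply: leq_sum => s _; exact: card_F.
Qed.

End Proof.

Theorem theorem1 (V : finType) (e : rel V)
  (e_sym : symmetric e) (e_irr : irreflexive e) :
  #|edges (@sub2_adj V e)| <= 3 * Ie (@sub2_adj V e).
Proof.
rewrite /Ie; apply: (big_ind (fun n => #|edges (@sub2_adj V e)| <= 3 * n)).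
- by rewrite leq_pmull.
- by move=> x y hx hy; case: (leqP x y).
- by move=> S hS; apply: main_bound.
Qed.
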